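(* Let $G$ be a terrain visibility graph. Then for every integer $k \ge 6$, $G$ contains no induced subgraph isomorphic to the complement $\overline{C_k}$ of the cycle on $k$ vertices (i.e., $G$ contains no antihole of size at least $6$).
   Context: A (1.5-dimensional) terrain is an $x$-monotone polygonal chain in the plane given by a finite set $V$ of terrain vertices with pairwise distinct $x$-coordinates. Write $p<q$ if $p^x<q^x$. The terrain visibility graph has vertex set $V$, and for $p<q$ the pair $\{p,q\}$ is an edge if and only if every terrain vertex $r$ with $p<r<q$ satisfies $r^y < p^y + (q^y-p^y)\frac{r^x-p^x}{q^x-p^x}$ (i.e., no vertex between them lies on or above the segment $pq$). A graph is a terrain visibility graph if it is isomorphic to the visibility graph of some terrain. *)

(* Defs.v *)
From HB Require Import structures.
From mathcomp Require Import all_boot all_order all_algebra.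
From mathcomp Require Import reals.
Set Implicit Arguments. Unset Strict Implicit. Unset Printing Implicit Defensive.
Import Order.TTheory GRing.Theory Num.Theory.
Local Open Scope ring_scope.

(* The chain is x-monotone, i.e. vertices are
   joined in order of increasing x-coordinate; only the vertex set matters
   for the visibility graph. *)

Definition sees (R : realType) (n : nat) (px py : 'I_n -> R) (p q : 'I_n) : Prop :=
  px p < px q /\
  forall r : 'I_n, px p < px r -> px r < px q ->
    py r < py p + (py q - py p) * ((px r - px p) / (px q - px p)).

Definition terrain_vis (R : realType) (n : nat) (px py : 'I_n -> R) (p q : 'I_n) : Prop :=
  sees px py p q \/ sees px py q p.

Definition is_terrain_visibility_graph (R : realType) (T : finType) (E : rel T) : Prop :=
  exists (n : nat) (px py : 'I_n -> R) (f : T -> 'I_n),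
    injective px /\ bijective f /\
    forall x y : T, E x y <-> terrain_vis px py (f x) (f y).

Definition cycle_adj (k : nat) (i j : 'I_k) : bool :=
  (j == (i.+1 %% k)%N :> nat) || (i == (j.+1 %% k)%N :> nat).

Definition has_induced_antihole (T : finType) (E : rel T) (k : nat) : Prop :=
  exists g : 'I_k -> T, injective g /\
    forall i j : 'I_k, i != j -> (E (g i) (g j) <-> ~~ cycle_adj i j).

(* Main.v *)
Require Import Defs.
From HB Require Import structures.
From mathcomp Require Import all_boot all_order all_algebra.
From mathcomp Require Import reals.
From mathcomp Require Import ring lra zify.
Import Order.TTheory GRing.Theory Num.Theory.
Local Open Scope ring_scope.

Lemma comb7 (R : realType) (V : Type) (x : V -> R) (vis : V -> V -> Prop)
  (Hs : forall a b, vis a b -> vis b a)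
  (HX : forall a b c d, x a < x b -> x b < x c -> x c < x d -> vis a c -> vis b d -> ~ vis a d -> False)
  (HQ : forall a b c d, x a < x b -> x b < x c -> x c < x d -> vis a b -> vis b c -> vis c d -> vis a d -> ~ vis a c -> ~ vis b d -> False)
  (w0 w1 w2 w3 w4 w5 w6 : V)
  (T_0_1 : x w0 < x w1 \/ x w1 < x w0)
  (T_0_2 : x w0 < x w2 \/ x w2 < x w0)
  (T_0_3 : x w0 < x w3 \/ x w3 < x w0)
  (T_0_4 : x w0 < x w4 \/ x w4 < x w0)
  (T_0_5 : x w0 < x w5 \/ x w5 < x w0)
  (T_0_6 : x w0 < x w6 \/ x w6 < x w0)
  (T_1_2 : x w1 < x w2 \/ x w2 < x w1)
  (T_1_3 : x w1 < x w3 \/ x w3 < x w1)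
  (T_1_4 : x w1 < x w4 \/ x w4 < x w1)
  (T_1_5 : x w1 < x w5 \/ x w5 < x w1)
  (T_1_6 : x w1 < x w6 \/ x w6 < x w1)
  (T_2_3 : x w2 < x w3 \/ x w3 < x w2)
  (T_2_4 : x w2 < x w4 \/ x w4 < x w2)
  (T_2_5 : x w2 < x w5 \/ x w5 < x w2)
  (T_2_6 : x w2 < x w6 \/ x w6 < x w2)
  (T_3_4 : x w3 < x w4 \/ x w4 < x w3)
  (T_3_5 : x w3 < x w5 \/ x w5 < x w3)
  (T_3_6 : x w3 < x w6 \/ x w6 < x w3)
  (T_4_5 : x w4 < x w5 \/ x w5 < x w4)
  (T_4_6 : x w4 < x w6 \/ x w6 < x w4)
  (T_5_6 : x w5 < x w6 \/ x w6 < x w5)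
  (L_0 : x w3 < x w0)
  (L_1 : x w3 < x w1)
  (L_2 : x w3 < x w2)
  (L_4 : x w3 < x w4)
  (L_5 : x w3 < x w5)
  (L_6 : x w3 < x w6)
  (N_0_1 : ~ vis w0 w1)
  (V_0_2 : vis w0 w2)
  (V_0_3 : vis w0 w3)
  (V_0_4 : vis w0 w4)
  (V_0_5 : vis w0 w5)
  (N_1_2 : ~ vis w1 w2)
  (V_1_3 : vis w1 w3)
  (V_1_4 : vis w1 w4)
  (V_1_5 : vis w1 w5)
  (V_1_6 : vis w1 w6)
  (N_2_3 : ~ vis w2 w3)
  (V_2_4 : vis w2 w4)
  (V_2_5 : vis w2 w5)
  (V_2_6 : vis w2 w6)
  (N_3_4 : ~ vis w3 w4)
  (V_3_5 : vis w3 w5)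
  (V_3_6 : vis w3 w6)
  (N_4_5 : ~ vis w4 w5)
  (V_4_6 : vis w4 w6)
  (N_5_6 : ~ vis w5 w6) : False.
Proof.
have Hns : forall a b, ~ vis a b -> ~ vis b a by move=> a b H1 H2; apply: H1; exact: Hs.
(case: T_0_1 => h1; [ (case: T_1_2 => h2; [ (exact: (HX _ _ _ _ L_0 h1 h2 (Hs _ _ V_1_3) V_0_2 (Hns _ _ N_2_3)))
 | (case: T_1_4 => h3; [ (exact: (HX _ _ _ _ L_0 h1 h3 (Hs _ _ V_1_3) V_0_4 N_3_4))
 | (case: T_0_4 => h4; [ (exact: (HQ _ _ _ _ L_0 h4 h3 (Hs _ _ V_0_3) V_0_4 (Hs _ _ V_1_4) (Hs _ _ V_1_3) N_3_4 N_0_1))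
 | (case: T_0_2 => h5; [ (exact: (HX _ _ _ _ L_4 h4 h5 (Hs _ _ V_0_3) (Hs _ _ V_2_4) (Hns _ _ N_2_3)))
 | (case: T_1_5 => h6; [ (exact: (HX _ _ _ _ h4 h1 h6 (Hs _ _ V_1_4) V_0_5 N_4_5))
 | (case: T_0_5 => h7; [ (exact: (HQ _ _ _ _ h4 h7 h6 (Hs _ _ V_0_4) V_0_5 (Hs _ _ V_1_5) (Hs _ _ V_1_4) N_4_5 N_0_1))
 | (case: T_2_4 => h8; [ (exact: (HX _ _ _ _ h8 h4 h1 (Hs _ _ V_0_2) (Hs _ _ V_1_4) (Hns _ _ N_1_2)))
 | (case: T_2_5 => h9; [ (exact: (HX _ _ _ _ h9 h7 h1 (Hs _ _ V_0_2) (Hs _ _ V_1_5) (Hns _ _ N_1_2)))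
 | (case: T_0_6 => h10; [ (exact: (HQ _ _ _ _ L_5 h9 (lt_trans h5 h10) V_3_5 (Hs _ _ V_2_5) V_2_6 V_3_6 (Hns _ _ N_2_3) N_5_6))
 | (case: T_2_6 => h11; [ (exact: (HX _ _ _ _ h11 h10 h1 (Hs _ _ V_0_2) (Hs _ _ V_1_6) (Hns _ _ N_1_2)))
 | (case: T_5_6 => h12; [ (exact: (HX _ _ _ _ L_5 h12 h11 V_3_6 (Hs _ _ V_2_5) (Hns _ _ N_2_3)))
 | (exact: (HX _ _ _ _ L_6 h12 h9 V_3_5 (Hs _ _ V_2_6) (Hns _ _ N_2_3))) ]) ]) ]) ]) ]) ]) ]) ]) ]) ]) ])
 | (case: T_0_4 => h13; [ (exact: (HX _ _ _ _ L_1 h1 h13 (Hs _ _ V_0_3) V_1_4 N_3_4))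
 | (case: T_0_2 => h14; [ (exact: (HX _ _ _ _ L_4 h13 h14 (Hs _ _ V_0_3) (Hs _ _ V_2_4) (Hns _ _ N_2_3)))
 | (case: T_1_4 => h15; [ (exact: (HQ _ _ _ _ L_1 h15 h13 (Hs _ _ V_1_3) V_1_4 (Hs _ _ V_0_4) (Hs _ _ V_0_3) N_3_4 (Hns _ _ N_0_1)))
 | (case: T_0_5 => h16; [ (exact: (HX _ _ _ _ h15 h1 h16 (Hs _ _ V_0_4) V_1_5 N_4_5))
 | (case: T_1_2 => h17; [ (exact: (HX _ _ _ _ L_4 h15 h17 (Hs _ _ V_1_3) (Hs _ _ V_2_4) (Hns _ _ N_2_3)))
 | (case: T_1_5 => h18; [ (exact: (HQ _ _ _ _ h15 h18 h16 (Hs _ _ V_1_4) V_1_5 (Hs _ _ V_0_5) (Hs _ _ V_0_4) N_4_5 (Hns _ _ N_0_1)))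
 | (case: T_0_6 => h19; [ (exact: (HX _ _ _ _ h18 h1 h19 (Hs _ _ V_0_5) V_1_6 N_5_6))
 | (case: T_1_6 => h20; [ (case: T_2_5 => h21; [ (exact: (HQ _ _ _ _ h21 h18 h20 V_2_5 (Hs _ _ V_1_5) V_1_6 V_2_6 (Hns _ _ N_1_2) N_5_6))
 | (exact: (HQ _ _ _ _ L_5 h21 (lt_trans h17 h20) V_3_5 (Hs _ _ V_2_5) V_2_6 V_3_6 (Hns _ _ N_2_3) N_5_6)) ])
 | (case: T_2_4 => h22; [ (case: T_2_5 => h23; [ (case: T_4_5 => h24; [ (exact: (HX _ _ _ _ h22 h24 h18 V_2_5 (Hs _ _ V_1_4) (Hns _ _ N_1_2)))
 | (exact: (HX _ _ _ _ h23 h24 h15 V_2_4 (Hs _ _ V_1_5) (Hns _ _ N_1_2))) ])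
 | (exact: (HQ _ _ _ _ h23 h22 h15 (Hs _ _ V_2_5) V_2_4 (Hs _ _ V_1_4) (Hs _ _ V_1_5) (Hns _ _ N_4_5) (Hns _ _ N_1_2))) ])
 | (case: T_2_5 => h25; [ (exact: (HQ _ _ _ _ h22 h25 h18 (Hs _ _ V_2_4) V_2_5 (Hs _ _ V_1_5) (Hs _ _ V_1_4) N_4_5 (Hns _ _ N_1_2)))
 | (case: T_2_6 => h26; [ (exact: (HQ _ _ _ _ L_5 h25 h26 V_3_5 (Hs _ _ V_2_5) V_2_6 V_3_6 (Hns _ _ N_2_3) N_5_6))
 | (case: T_5_6 => h27; [ (exact: (HX _ _ _ _ L_5 h27 h26 V_3_6 (Hs _ _ V_2_5) (Hns _ _ N_2_3)))
 | (exact: (HX _ _ _ _ L_6 h27 h25 V_3_5 (Hs _ _ V_2_6) (Hns _ _ N_2_3))) ]) ]) ]) ]) ]) ]) ]) ]) ]) ]) ]) ]) ]).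
Qed.

Lemma comb6 (R : realType) (V : Type) (x : V -> R) (vis : V -> V -> Prop)
  (Hs : forall a b, vis a b -> vis b a)
  (HX : forall a b c d, x a < x b -> x b < x c -> x c < x d -> vis a c -> vis b d -> ~ vis a d -> False)
  (HQ : forall a b c d, x a < x b -> x b < x c -> x c < x d -> vis a b -> vis b c -> vis c d -> vis a d -> ~ vis a c -> ~ vis b d -> False)
  (w0 w1 w2 w3 w4 w5 : V)
  (T_0_1 : x w0 < x w1 \/ x w1 < x w0)
  (T_0_2 : x w0 < x w2 \/ x w2 < x w0)
  (T_0_3 : x w0 < x w3 \/ x w3 < x w0)
  (T_0_4 : x w0 < x w4 \/ x w4 < x w0)
  (T_0_5 : x w0 < x w5 \/ x w5 < x w0)
  (T_1_2 : x w1 < x w2 \/ x w2 < x w1)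
  (T_1_3 : x w1 < x w3 \/ x w3 < x w1)
  (T_1_4 : x w1 < x w4 \/ x w4 < x w1)
  (T_1_5 : x w1 < x w5 \/ x w5 < x w1)
  (T_2_3 : x w2 < x w3 \/ x w3 < x w2)
  (T_2_4 : x w2 < x w4 \/ x w4 < x w2)
  (T_2_5 : x w2 < x w5 \/ x w5 < x w2)
  (T_3_4 : x w3 < x w4 \/ x w4 < x w3)
  (T_3_5 : x w3 < x w5 \/ x w5 < x w3)
  (T_4_5 : x w4 < x w5 \/ x w5 < x w4)
  (L_0 : x w3 < x w0)
  (L_1 : x w3 < x w1)
  (L_2 : x w3 < x w2)
  (L_4 : x w3 < x w4)
  (L_5 : x w3 < x w5)
  (N_0_1 : ~ vis w0 w1)
  (V_0_2 : vis w0 w2)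
  (V_0_3 : vis w0 w3)
  (V_0_4 : vis w0 w4)
  (N_0_5 : ~ vis w0 w5)
  (N_1_2 : ~ vis w1 w2)
  (V_1_3 : vis w1 w3)
  (V_1_4 : vis w1 w4)
  (V_1_5 : vis w1 w5)
  (N_2_3 : ~ vis w2 w3)
  (V_2_4 : vis w2 w4)
  (V_2_5 : vis w2 w5)
  (N_3_4 : ~ vis w3 w4)
  (V_3_5 : vis w3 w5)
  (N_4_5 : ~ vis w4 w5) : False.
Proof.
have Hns : forall a b, ~ vis a b -> ~ vis b a by move=> a b H1 H2; apply: H1; exact: Hs.
(case: T_0_1 => h1; [ (case: T_1_2 => h2; [ (exact: (HX _ _ _ _ L_0 h1 h2 (Hs _ _ V_1_3) V_0_2 (Hns _ _ N_2_3)))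
 | (case: T_1_4 => h3; [ (exact: (HX _ _ _ _ L_0 h1 h3 (Hs _ _ V_1_3) V_0_4 N_3_4))
 | (case: T_0_4 => h4; [ (exact: (HQ _ _ _ _ L_0 h4 h3 (Hs _ _ V_0_3) V_0_4 (Hs _ _ V_1_4) (Hs _ _ V_1_3) N_3_4 N_0_1))
 | (case: T_0_2 => h5; [ (exact: (HX _ _ _ _ L_4 h4 h5 (Hs _ _ V_0_3) (Hs _ _ V_2_4) (Hns _ _ N_2_3)))
 | (case: T_2_4 => h6; [ (exact: (HX _ _ _ _ h6 h4 h1 (Hs _ _ V_0_2) (Hs _ _ V_1_4) (Hns _ _ N_1_2)))
 | (case: T_0_5 => h7; [ (exact: (HX _ _ _ _ h6 h5 h7 (Hs _ _ V_0_4) V_2_5 N_4_5))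
 | (case: T_2_5 => h8; [ (exact: (HX _ _ _ _ h8 h7 h1 (Hs _ _ V_0_2) (Hs _ _ V_1_5) (Hns _ _ N_1_2)))
 | (exact: (HQ _ _ _ _ L_5 h8 h5 V_3_5 (Hs _ _ V_2_5) (Hs _ _ V_0_2) (Hs _ _ V_0_3) (Hns _ _ N_2_3) (Hns _ _ N_0_5))) ]) ]) ]) ]) ]) ]) ])
 | (case: T_0_4 => h9; [ (exact: (HX _ _ _ _ L_1 h1 h9 (Hs _ _ V_0_3) V_1_4 N_3_4))
 | (case: T_0_2 => h10; [ (exact: (HX _ _ _ _ L_4 h9 h10 (Hs _ _ V_0_3) (Hs _ _ V_2_4) (Hns _ _ N_2_3)))
 | (case: T_1_4 => h11; [ (exact: (HQ _ _ _ _ L_1 h11 h9 (Hs _ _ V_1_3) V_1_4 (Hs _ _ V_0_4) (Hs _ _ V_0_3) N_3_4 (Hns _ _ N_0_1)))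
 | (case: T_0_5 => h12; [ (exact: (HX _ _ _ _ h11 h1 h12 (Hs _ _ V_0_4) V_1_5 N_4_5))
 | (case: T_1_2 => h13; [ (exact: (HX _ _ _ _ L_4 h11 h13 (Hs _ _ V_1_3) (Hs _ _ V_2_4) (Hns _ _ N_2_3)))
 | (case: T_2_5 => h14; [ (case: T_4_5 => h15; [ (case: T_1_5 => h16; [ (case: T_2_4 => h17; [ (exact: (HQ _ _ _ _ h17 h11 h16 V_2_4 (Hs _ _ V_1_4) V_1_5 V_2_5 (Hns _ _ N_1_2) N_4_5))
 | (exact: (HX _ _ _ _ h17 h13 h16 (Hs _ _ V_1_4) V_2_5 N_4_5)) ])
 | (case: T_2_4 => h18; [ (exact: (HX _ _ _ _ h18 h15 h16 V_2_5 (Hs _ _ V_1_4) (Hns _ _ N_1_2)))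
 | (exact: (HQ _ _ _ _ h18 h14 h16 (Hs _ _ V_2_4) V_2_5 (Hs _ _ V_1_5) (Hs _ _ V_1_4) N_4_5 (Hns _ _ N_1_2))) ]) ])
 | (exact: (HX _ _ _ _ h14 h15 h11 V_2_4 (Hs _ _ V_1_5) (Hns _ _ N_1_2))) ])
 | (exact: (HQ _ _ _ _ L_5 h14 h10 V_3_5 (Hs _ _ V_2_5) (Hs _ _ V_0_2) (Hs _ _ V_0_3) (Hns _ _ N_2_3) (Hns _ _ N_0_5))) ]) ]) ]) ]) ]) ]) ]).
Qed.


Set Implicit Arguments. Unset Strict Implicit. Unset Printing Implicit Defensive.
Import Order.TTheory GRing.Theory Num.Theory.
Local Open Scope ring_scope.

Section Geo.
Variable R : realType.

Definition slope (x1 y1 x2 y2 : R) := (y2 - y1) / (x2 - x1).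

Lemma below_slope (xp yp xq yq xr yr : R) : xp < xq -> xp < xr ->
  (yq < yp + (yr - yp) * ((xq - xp) / (xr - xp))) =
  (slope xp yp xq yq < slope xp yp xr yr).
Proof.
move=> hq hr.
have hA : 0 < xq - xp by rewrite subr_gt0.
rewrite /slope ltr_pdivrMr // -ltrBlDl.
by rewrite mulrA mulrAC.
Qed.

Lemma triple (xp yp xq yq xr yr : R) : xp < xq -> xq < xr ->
  let u := slope xp yp xq yq in let v := slope xq yq xr yr in
  let M := slope xp yp xr yr in
  ((u < M) = (u < v)) /\ ((M < v) = (u < v)).
Proof.
move=> hq hr u v M.
have hA : 0 < xq - xp by rewrite subr_gt0.
have hB : 0 < xr - xq by rewrite subr_gt0.
have hAB : 0 < xr - xp by rewrite subr_gt0; apply: lt_trans hr.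
have eu : u * (xq - xp) = yq - yp by rewrite /u /slope divfK // gt_eqF.
have ev : v * (xr - xq) = yr - yq by rewrite /v /slope divfK // gt_eqF.
have eM : M * (xr - xp) = yr - yp by rewrite /M /slope divfK // gt_eqF.
have eAB : xr - xp = (xq - xp) + (xr - xq) by ring.
have key : M * (xr - xp) = u * (xq - xp) + v * (xr - xq) by rewrite eu ev eM; ring.
split.
- rewrite -(ltr_pM2r hAB) key eAB (mulrDr u (xq - xp)) ltrD2l -!(mulrC (xr - xq)).
  by rewrite ltr_pM2l.
- rewrite -(ltr_pM2r hAB) key eAB (mulrDr v (xq - xp)) ltrD2r -!(mulrC (xq - xp)).
  by rewrite ltr_pM2l.
Qed.



Variables (n : nat) (px py : 'I_n -> R).
Local Notation m p q := (slope (px p) (py p) (px q) (py q)).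

Lemma slopeC p q : m p q = m q p.
Proof. by rewrite /slope -opprB -(opprB (px p)) invrN mulrNN. Qed.

Lemma sees_iff p q : px p < px q ->
  (sees px py p q <-> forall r, px p < px r -> px r < px q -> m p r < m p q).
Proof.
move=> hpq; split.
- by case=> _ H r h1 h2; rewrite -below_slope //; apply: H.
- move=> H; split=> // r h1 h2; rewrite below_slope //; exact: H.
Qed.

Lemma T1 p q r : px p < px q -> px q < px r -> (m p q < m p r) = (m p q < m q r).
Proof. by move=> h1 h2; case: (triple (py p) (py q) (py r) h1 h2). Qed.
Lemma T2 p q r : px p < px q -> px q < px r -> (m p r < m q r) = (m p q < m q r).
Proof. by move=> h1 h2; case: (triple (py p) (py q) (py r) h1 h2). Qed.

Lemma vis_sees p q : px p < px q -> terrain_vis px py p q -> sees px py p q.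
Proof. by move=> h [//|[h2 _]]; move: (lt_trans h h2); rewrite ltxx. Qed.

Lemma sees_vis p q : sees px py p q -> terrain_vis px py p q.
Proof. by left. Qed.

Lemma X_prop a b c d : px a < px b -> px b < px c -> px c < px d ->
  sees px py a c -> sees px py b d -> sees px py a d.
Proof.
move=> hab hbc hcd Hac Hbd.
have hac := lt_trans hab hbc; have hbd := lt_trans hbc hcd.
have had := lt_trans hac hcd.
move/(sees_iff hac): Hac => Hac; move/(sees_iff hbd): Hbd => Hbd.
apply/(sees_iff had).
have e1 := Hac b hab hbc. have e2 := Hbd c hbc hcd.
have e3 : m a c < m b c by rewrite T2 // -T1.
have e4 : m b c < m c d by rewrite -T1.
have e5 : m a c < m a d by rewrite T1 //; exact: lt_trans e3 e4.
have e6 : m a b < m b c by rewrite -T1.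
have e7 : m a d < m b d.
  by rewrite T2 ?(lt_trans hbc hcd) //; apply: lt_trans e6 e2.
move=> r har hrd.
case: (ltP (px r) (px c)) => hrc.
- exact: lt_trans (Hac r har hrc) e5.
- have hbr : px b < px r by apply: lt_le_trans hbc hrc.
  have f1 := Hbd r hbr hrd.
  have f2 : m b d < m r d by rewrite T2 // -T1.
  by rewrite T1 // -T2 //; apply: lt_trans e7 f2.
Qed.

Lemma sees_join a b c : injective px -> px a < px b -> px b < px c ->
  sees px py a b -> sees px py b c -> m a b < m a c -> sees px py a c.
Proof.
move=> pinj hab hbc Hab Hbc e.
have hac := lt_trans hab hbc.
move/(sees_iff hab): Hab => Hab; move/(sees_iff hbc): Hbc => Hbc.
apply/(sees_iff hac) => r har hrc.
case: (ltgtP (px r) (px b)) => hrb.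
- exact: lt_trans (Hab r har hrb) e.
- have f1 := Hbc r hrb hrc.
  have f2 : m b c < m r c by rewrite T2 // -T1.
  have f3 : m a c < m b c by rewrite T2 // -T1.
  by rewrite T1 // -T2 //; apply: lt_trans f3 f2.
- by move/pinj: hrb => ->.
Qed.

Lemma Q_prop a b c d : injective px -> px a < px b -> px b < px c -> px c < px d ->
  sees px py a b -> sees px py b c -> sees px py c d -> sees px py a d ->
  ~ sees px py a c -> ~ sees px py b d -> False.
Proof.
move=> pinj hab hbc hcd Hab Hbc Hcd Had nac nbd.
have hac := lt_trans hab hbc; have hbd := lt_trans hbc hcd.
have had := lt_trans hac hcd.
have g1 : ~ (m a b < m a c) by move=> e; apply: nac; exact: sees_join Hab Hbc e.
have g2 : ~ (m b c < m b d) by move=> e; apply: nbd; exact: sees_join Hbc Hcd e.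
move/(sees_iff had): Had => Had.
have e1 := Had b hab hbd. have e2 := Had c hac hcd.
have e3 : m a d < m c d by rewrite T2 // -T1.
have g1' : m b c <= m a b by rewrite leNgt -T1 //; apply/negP.
have g2' : m c d <= m b c by rewrite leNgt -T1 //; apply/negP.
have := lt_le_trans (lt_trans e1 e3) (le_trans g2' g1').
by rewrite ltxx.
Qed.
End Geo.

Lemma modS_mod (m k : nat) : (((m %% k).+1) %% k = m.+1 %% k)%N.
Proof. by rewrite -addn1 modnDml addn1. Qed.

Lemma idx_adj (k A i j : nat) (kp : (0 < k)%N) : (i < j)%N -> (j < k)%N ->
  cycle_adj (Ordinal (ltn_pmod (A + i) kp)) (Ordinal (ltn_pmod (A + j) kp)) =
  ((j == i.+1) || ((j.+1 == k) && (i == 0%N)))%N.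
Proof.
move=> hij hjk; rewrite /cycle_adj /= !modS_mod -!addnS !eqn_modDl.
have H1 : ((j %% k == i.+1 %% k) = (j == i.+1))%N.
  by rewrite (modn_small hjk) (@modn_small i.+1) //; apply: leq_ltn_trans hjk.
have H2 : ((i %% k == j.+1 %% k) = ((j.+1 == k) && (i == 0)))%N.
  rewrite (modn_small (ltn_trans hij hjk)).
  case: (ltngtP j.+1 k) => h; first rewrite (modn_small h).
    have -> : (i == j.+1) = false by apply/eqP; lia.
    by apply/esym/andP => -[/eqP ? _]; lia.
  - lia.
  - by rewrite -h modnn.
by rewrite H1 H2.
Qed.


Theorem theorem5 (R : realType) (T : finType) (E : rel T) :
  is_terrain_visibility_graph R E ->
  forall k : nat, (6 <= k)%N -> ~ has_induced_antihole E k.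
Proof.
move=> [n [px [py [f [pinj [fbij HE]]]]]] k k6 [g [ginj Hg]].
have kp : (0 < k)%N by lia.
have finj : injective f := bij_inj fbij.
pose h i := f (g i).
have hinj : injective h by move=> i j /finj /ginj.
case: (@arg_minP _ _ 'I_k (Ordinal kp) xpredT (fun i => px (h i)) isT) => l _ Hl.
pose A := (l + (k - 3))%N.
pose idx d := Ordinal (ltn_pmod (A + d) kp).
pose w d := h (idx d).
have idx3 : idx 3%N = l.
  apply: val_inj => /=; rewrite /A -addnA.
  have -> : (k - 3 + 3 = k)%N by lia.
  by rewrite modnDr modn_small.
have idx_inj : forall i j, (i < k)%N -> (j < k)%N -> idx i = idx j -> i = j.
  move=> i j hi hj /(congr1 val) /= /eqP; rewrite eqn_modDl !modn_small //.
  by move/eqP.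
have tot : forall i j, (i != j)%N -> (i < k)%N -> (j < k)%N ->
    px (w i) < px (w j) \/ px (w j) < px (w i).
  move=> i j ne hi hj; apply/orP; apply: lt_total.
  apply/eqP => /pinj /hinj /idx_inj e; move: ne; rewrite e //.
  by rewrite eqxx.
have left : forall j, (j != 3)%N -> (j < k)%N -> px (w 3%N) < px (w j).
  move=> j ne hj; rewrite lt_neqAle {1 3}/w idx3 Hl // andbT.
  apply/eqP => /pinj /hinj e; move: ne; rewrite -idx3 in e.
  by rewrite (idx_inj _ _ _ hj e) //; lia.
have visw : forall i j, (i < j)%N -> (j < k)%N ->
    (terrain_vis px py (w i) (w j) <-> ~~ ((j == i.+1) || ((j.+1 == k) && (i == 0%N))))%N.
  move=> i j hij hjk; rewrite /w /h -HE -(idx_adj A kp hij hjk).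
  apply: Hg; apply/eqP => /idx_inj e; have := e (ltn_trans hij hjk) hjk; lia.
have visT : forall i j, (i.+1 < j)%N -> (j < k)%N -> ~~ ((j.+1 == k) && (i == 0%N))%N ->
    terrain_vis px py (w i) (w j).
  move=> i j h1 h2 h3; apply/(visw _ _ (ltn_trans (ltnSn i) h1) h2).
  rewrite negb_or h3 andbT; apply/eqP; lia.
have nvis : forall i, (i.+1 < k)%N -> ~ terrain_vis px py (w i) (w i.+1).
  by move=> i hi /(visw _ _ (ltnSn i) hi); rewrite eqxx.
have nvisw : forall j, (0 < j)%N -> j.+1 = k -> ~ terrain_vis px py (w 0%N) (w j).
  move=> j hj e; have hjk : (j < k)%N by rewrite -e.
  by move/(visw _ _ hj hjk); rewrite e !eqxx orbT.
have Hs : forall a b, terrain_vis px py a b -> terrain_vis px py b a.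
  by move=> a b [H|H]; [right|left].
have HX : forall a b c d, px a < px b -> px b < px c -> px c < px d ->
    terrain_vis px py a c -> terrain_vis px py b d -> ~ terrain_vis px py a d -> False.
  move=> a b c d h1 h2 h3 Vac Vbd Nad; apply: Nad; left.
  apply: (X_prop h1 h2 h3).
  - exact: vis_sees (lt_trans h1 h2) Vac.
  - exact: vis_sees (lt_trans h2 h3) Vbd.
have HQ : forall a b c d, px a < px b -> px b < px c -> px c < px d ->
    terrain_vis px py a b -> terrain_vis px py b c -> terrain_vis px py c d ->
    terrain_vis px py a d -> ~ terrain_vis px py a c -> ~ terrain_vis px py b d -> False.
  move=> a b c d h1 h2 h3 Vab Vbc Vcd Vad Nac Nbd.
  apply: (Q_prop pinj h1 h2 h3).
  - exact: vis_sees h1 Vab.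
  - exact: vis_sees h2 Vbc.
  - exact: vis_sees h3 Vcd.
  - exact: vis_sees (lt_trans (lt_trans h1 h2) h3) Vad.
  - by move=> H; apply: Nac; left.
  - by move=> H; apply: Nbd; left.
case: (ltnP 6 k) => hk.
{ apply: (@comb7 R 'I_n px (terrain_vis px py) Hs HX HQ (w 0%N) (w 1%N) (w 2%N) (w 3%N) (w 4%N) (w 5%N) (w 6%N)).
  all: try first [ by apply: tot; lia | by apply: left; lia | by apply: nvis; lia
             | by apply: nvisw; lia
             | by apply: visT; [lia|lia|apply/negP => /andP [/eqP ? /eqP ?]; lia] ]. }
{ apply: (@comb6 R 'I_n px (terrain_vis px py) Hs HX HQ (w 0%N) (w 1%N) (w 2%N) (w 3%N) (w 4%N) (w 5%N)).
  all: first [ by apply: tot; lia | by apply: left; lia | by apply: nvis; lia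
             | by apply: nvisw; lia
             | by apply: visT; [lia|lia|apply/negP => /andP [/eqP ? /eqP ?]; lia] ]. }
Qed.
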